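(* Let $a,b\in\mathbb{B}^2\setminus\{0\}$ be distinct points with $|a|\neq|b|$ lying on a circle orthogonal to the unit circle. Put $\alpha=a(1-|b|^2)+b(1-|a|^2)$ and \[ \mathrm{cen}=\frac{\alpha}{2-a\overline{b}-\overline{a}b},\qquad p=\frac{\alpha}{2-|a|^2-|b|^2},\qquad m_{ab}=\frac{\alpha}{1-|a|^2|b|^2+\sqrt{(1-|a|^2)(1-|b|^2)}\,|1-\overline{a}b|}. \] Then $m_{ab}$ is the hyperbolic midpoint of the segment $[\mathrm{cen},p]$, i.e. $\rho_{\mathbb{B}^2}(\mathrm{cen},m_{ab})=\rho_{\mathbb{B}^2}(m_{ab},p)$. Moreover, $B^2(\mathrm{cen},|\mathrm{cen}-a|)=B_\rho\bigl(m_{ab},\rho_{\mathbb{B}^2}(a,b)/2\bigr)$.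
   Context: $\mathbb{B}^2$ is the unit disk in $\mathbb{C}$. The hyperbolic metric is given by $\mathrm{sh}\frac{\rho_{\mathbb{B}^2}(x,y)}{2}=\frac{|x-y|}{\sqrt{(1-|x|^2)(1-|y|^2)}}$ for $x,y\in\mathbb{B}^2$. $B^2(x,r)$ is the Euclidean disk with center $x$ and radius $r$, and $B_\rho(x,M)=\{y\in\mathbb{B}^2:\rho_{\mathbb{B}^2}(x,y)<M\}$ is the hyperbolic disk. (The point $m_{ab}$ is the hyperbolic midpoint of $a$ and $b$; $\mathrm{cen}$ is the intersection of the tangent lines at $a$ and $b$ to the hyperbolic geodesic circle through $a,b$; $p$ is the intersection of the line through $0$ and $\mathrm{cen}$ with the segment $[a,b]$.) *)

(* Defs.v *)
From Stdlib Require Export Reals.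
From Coquelicot Require Export Coquelicot.
Open Scope R_scope.

Definition in_disk (x : C) : Prop := Cmod x < 1.

Definition rho (x y : C) : R :=
  2 * arcsinh (Cmod (x - y)%C / sqrt ((1 - Cmod x ^ 2) * (1 - Cmod y ^ 2))).

(* a and b lie on a (genuine) circle orthogonal to the unit circle:
   a circle with center c and radius r > 0 such that |c|^2 = 1 + r^2. *)
Definition on_orthogonal_circle (a b : C) : Prop :=
  exists (c : C) (r : R), 0 < r /\ Cmod (a - c)%C = r /\ Cmod (b - c)%C = r
                          /\ Cmod c ^ 2 = 1 + r ^ 2.

Definition alpha_ab (a b : C) : C :=
  (a * RtoC (1 - Cmod b ^ 2) + b * RtoC (1 - Cmod a ^ 2))%C.

Definition cen (a b : C) : C :=
  (alpha_ab a b / (RtoC 2 - a * Cconj b - Cconj a * b))%C.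

Definition pt_p (a b : C) : C :=
  (alpha_ab a b / RtoC (2 - Cmod a ^ 2 - Cmod b ^ 2))%C.

Definition m_ab (a b : C) : C :=
  (alpha_ab a b /
   RtoC (1 - Cmod a ^ 2 * Cmod b ^ 2
         + sqrt ((1 - Cmod a ^ 2) * (1 - Cmod b ^ 2)) * Cmod (1 - Cconj a * b)%C))%C.

(* Main.v *)
Require Import Defs.
From Stdlib Require Import Lra Psatz.
Open Scope R_scope.

Lemma Cmod2 x y : Cmod (x,y) ^ 2 = x^2 + y^2.
Proof. unfold Cmod; cbn [fst snd]. rewrite pow2_sqrt; [ring| nra]. Qed.

Lemma Cdiv_R (z : C) (r : R) : r <> 0 -> (z / RtoC r)%C = (fst z / r, snd z / r).
Proof. intros Hr. destruct z as [x y]. unfold Cdiv, Cmult, Cinv, RtoC; simpl.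
 f_equal; field; auto. Qed.

Lemma den_cen a1 a2 b1 b2 : (RtoC 2 - (a1,a2) * Cconj (b1,b2) - Cconj (a1,a2) * (b1,b2))%C = RtoC (2 - 2*(a1*b1+a2*b2)).
Proof. unfold Cminus, Cplus, Copp, Cmult, Cconj, RtoC; simpl. f_equal; ring. Qed.

Lemma alpha_eq a1 a2 b1 b2 : alpha_ab (a1,a2) (b1,b2) =
  (a1*(1-(b1^2+b2^2)) + b1*(1-(a1^2+a2^2)), a2*(1-(b1^2+b2^2)) + b2*(1-(a1^2+a2^2))).
Proof. unfold alpha_ab. rewrite !Cmod2. unfold Cplus, Cmult, RtoC; simpl. f_equal; ring. Qed.

Lemma t2 a1 a2 b1 b2 : Cmod (1 - Cconj (a1,a2) * (b1,b2))%C ^2 = 1 - 2*(a1*b1+a2*b2) + (a1^2+a2^2)*(b1^2+b2^2).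
Proof. replace (1 - Cconj (a1,a2) * (b1,b2))%C with (1 - (a1*b1+a2*b2), -(a1*b2 - a2*b1)).
 - rewrite Cmod2. ring.
 - unfold Cminus, Cplus, Copp, Cmult, Cconj, RtoC; simpl; f_equal; ring. Qed.

Lemma rho_eq x1 x2 y1 y2 : rho (x1,x2) (y1,y2) = 2 * arcsinh (sqrt ((x1-y1)^2+(x2-y2)^2) / sqrt ((1-(x1^2+x2^2))*(1-(y1^2+y2^2)))).
Proof. unfold rho. rewrite !Cmod2. replace ((x1,x2) - (y1,y2))%C with (x1-y1,x2-y2).
  - unfold Cmod; cbn [fst snd]. do 4 f_equal; ring.
  - unfold Cminus, Cplus, Copp; simpl; f_equal; ring. Qed.

Lemma sinh2 v : sinh (2*v) = 2 * sinh v * cosh v.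
Proof. unfold sinh, cosh. replace (2*v) with (v+v) by ring. replace (-(v+v)) with (-v + -v) by ring.
 rewrite !exp_plus. field. Qed.

Lemma cosh_sq v : cosh v ^2 = 1 + sinh v ^2.
Proof. unfold sinh, cosh. assert (exp v * exp (-v) = 1) by (rewrite <- exp_plus; replace (v + -v) with 0 by ring; apply exp_0).
 nra. Qed.

Lemma cosh_pos v : 0 < cosh v.
Proof. unfold cosh. pose proof (exp_pos v); pose proof (exp_pos (-v)). lra. Qed.

Lemma sinh_lt_iff x y : x < y <-> sinh x < sinh y.
Proof. split; [apply sinh_lt|]. intros H. destruct (Rlt_or_le x y) as [h|h]; auto.
 destruct (Rle_lt_or_eq_dec _ _ h) as [h'|h'].
 - apply sinh_lt in h'. lra.
 - subst. lra. Qed.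

Lemma half X Y q : 0 <= X -> 0 <= Y -> 1 + Y^2 = q^2 -> 0 < q ->
  (2*arcsinh X < arcsinh Y <-> 2*X^2+1 < q).
Proof. intros HX HY Hq q0.
 rewrite sinh_lt_iff, sinh2, !sinh_arcsinh.
 pose proof (cosh_sq (arcsinh X)) as C2. rewrite sinh_arcsinh in C2.
 pose proof (cosh_pos (arcsinh X)) as C0.
 set (C := cosh (arcsinh X)) in *.
 split; intros H.
 - assert (4*X^2*C^2 < Y^2). { assert (0 <= 2*X*C) by nra. nra. }
   nra.
 - assert (4*X^2*C^2 < Y^2) by nra.
   assert (0 <= 2*X*C) by nra. nra.
Qed.

Lemma sqrt_ratio U1 V1 U2 V2 : 0 < V1 -> 0 < V2 -> 0 <= U1 -> 0 <= U2 -> U1 * V2 = U2 * V1 ->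
  sqrt U1 / sqrt V1 = sqrt U2 / sqrt V2.
Proof. intros. rewrite <- !sqrt_div_alt by auto. f_equal.
 apply (Rmult_eq_reg_r (V1*V2)); [|nra]. replace (U1/V1*(V1*V2)) with (U1*V2) by (field; lra).
 replace (U2/V2*(V1*V2)) with (U2*V1) by (field; lra). auto. Qed.

Lemma ray al1 al2 N r1 r2 : al1^2+al2^2 = N -> r1 <> 0 -> r2 <> 0 ->
  sqrt ((al1/r1-al1/r2)^2+(al2/r1-al2/r2)^2) / sqrt ((1-((al1/r1)^2+(al2/r1)^2))*(1-((al1/r2)^2+(al2/r2)^2)))
  = sqrt (N*(1/r1-1/r2)^2) / sqrt ((1-N/r1^2)*(1-N/r2^2)).
Proof. intros HN h1 h2. subst N. f_equal; f_equal; field; auto. Qed.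

Lemma core1 u s t : 0<s -> s<t -> 0<u -> s*t <= u ->
  sqrt ((u^2 - s^2*t^2)*(1/(u+t^2)-1/(u+s*t))^2) / sqrt ((1-(u^2 - s^2*t^2)/(u+t^2)^2)*(1-(u^2 - s^2*t^2)/(u+s*t)^2))
  = sqrt ((u^2 - s^2*t^2)*(1/(u+s*t)-1/(u+s^2))^2) / sqrt ((1-(u^2 - s^2*t^2)/(u+s*t)^2)*(1-(u^2 - s^2*t^2)/(u+s^2)^2)).
Proof. intros hs hst hu hu2.
 assert (p1 : 0 < u+t^2) by nra. assert (p2 : 0 < u+s^2) by nra. assert (p3 : 0 < u+s*t) by nra.
 assert (n1 : u+t^2 <> 0) by lra. assert (n2 : u+s^2 <> 0) by lra. assert (n3 : u+s*t <> 0) by lra.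
 assert (q1 : 0 < 1-(u^2 - s^2*t^2)/(u+t^2)^2).
 { replace (1-(u^2 - s^2*t^2)/(u+t^2)^2) with (t^2*(2*u+t^2+s^2)/(u+t^2)^2) by (field; auto).
   apply Rdiv_lt_0_compat; [apply Rmult_lt_0_compat; [apply pow_lt; lra| nra] | apply pow_lt; lra]. }
 assert (q2 : 0 < 1-(u^2 - s^2*t^2)/(u+s^2)^2).
 { replace (1-(u^2 - s^2*t^2)/(u+s^2)^2) with (s^2*(2*u+t^2+s^2)/(u+s^2)^2) by (field; auto).
   apply Rdiv_lt_0_compat; [apply Rmult_lt_0_compat; [apply pow_lt; lra| nra] | apply pow_lt; lra]. }
 assert (q3 : 0 < 1-(u^2 - s^2*t^2)/(u+s*t)^2).
 { replace (1-(u^2 - s^2*t^2)/(u+s*t)^2) with (2*s*t/(u+s*t)) by (field; auto).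
   apply Rdiv_lt_0_compat; nra. }
 assert (N0 : 0 <= u^2 - s^2*t^2) by nra.
 apply sqrt_ratio; [apply Rmult_lt_0_compat; auto|apply Rmult_lt_0_compat; auto|apply Rmult_le_pos; [auto|apply pow2_ge_0]|apply Rmult_le_pos; [auto|apply pow2_ge_0]|].
 field; auto.
Qed.

Lemma core2 (al1 al2 z1 z2 u s t Yv : R) :
 0<s -> s<t -> 0<u -> s*t <= u -> al1^2+al2^2 = u^2 - s^2*t^2 ->
 0 <= Yv -> 1 + Yv^2 = (t/s)^2 ->
 ((z1 - al1/(u+t^2))^2 + (z2 - al2/(u+t^2))^2 < t^2*(t^2-s^2)/(u+t^2)^2 <->
  (z1^2+z2^2 < 1 /\ 2*arcsinh (sqrt((al1/(u+s*t) - z1)^2 + (al2/(u+s*t)-z2)^2)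
     / sqrt((1-((al1/(u+s*t))^2+(al2/(u+s*t))^2))*(1-(z1^2+z2^2)))) < arcsinh Yv)).
Proof. intros hs hst hu hu2 HN HY HY2.
 assert (p1 : 0 < u+t^2) by nra. assert (p3 : 0 < u+s*t) by nra.
 assert (n1 : u+t^2 <> 0) by lra. assert (n3 : u+s*t <> 0) by lra.
 set (D1 := u+t^2) in *. set (D3 := u+s*t) in *.
 set (Um := (al1/D3 - z1)^2 + (al2/D3-z2)^2).
 set (Vm := 1-((al1/D3)^2+(al2/D3)^2)).
 set (Vz := 1-(z1^2+z2^2)).
 set (E1 := (z1 - al1/D1)^2 + (z2 - al2/D1)^2 - t^2*(t^2-s^2)/D1^2).
 set (k := t*(t-s)/D3).
 assert (Vm_eq : Vm = 2*s*t/D3).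
 { unfold Vm. replace ((al1/D3)^2+(al2/D3)^2) with ((al1^2+al2^2)/D3^2) by (field; auto).
   rewrite HN. unfold D3. field. auto. }
 assert (Vm0 : 0 < Vm). { rewrite Vm_eq. apply Rdiv_lt_0_compat; nra. }
 assert (k0 : 0 < k). { unfold k. apply Rdiv_lt_0_compat; nra. }
 assert (key : Um - k*Vz = (D1/D3)*E1).
 { assert (Um - k*Vz - (D1/D3)*E1 = (al1^2+al2^2 - (u^2 - s^2*t^2)) * (1/D3^2 - 1/(D1*D3))).
   { unfold Um, k, Vz, E1, D1, D3. field. split; auto. }
   rewrite HN in H. lra. }
 assert (r0 : 0 < D1/D3) by (apply Rdiv_lt_0_compat; auto).
 assert (Um0 : 0 <= Um) by (unfold Um; apply Rplus_le_le_0_compat; apply pow2_ge_0).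
 assert (step : 0 < Vz -> (2*arcsinh (sqrt Um / sqrt (Vm*Vz)) < arcsinh Yv <-> Um - k*Vz < 0)).
 { intros Vz0.
   assert (W0 : 0 < Vm*Vz) by (apply Rmult_lt_0_compat; auto).
   set (X := sqrt Um / sqrt (Vm*Vz)).
   assert (X0 : 0 <= X) by (unfold X; apply Rdiv_le_0_compat; [apply sqrt_pos| apply sqrt_lt_R0; auto]).
   assert (X2 : X^2 * (Vm*Vz) = Um).
   { unfold X. unfold Rdiv. rewrite Rpow_mult_distr, pow2_sqrt by auto.
     rewrite pow_inv, pow2_sqrt by lra. field. lra. }
   rewrite (half X Yv (t/s)); auto; [| apply Rdiv_lt_0_compat; lra].
   assert (kk : k * Vz = (t-s)/(2*s) * (Vm*Vz)).
   { rewrite Vm_eq. unfold k. field. split; lra. }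
   split; intros H.
   - assert (h1 : 2*s*X^2 + s < t).
     { apply (Rmult_lt_compat_l s) in H; auto. replace (s*(t/s)) with t in H by (field; lra). lra. }
     assert (h2 : X^2 < (t-s)/(2*s)).
     { apply (Rmult_lt_reg_l (2*s)); [lra|]. replace (2*s*((t-s)/(2*s))) with (t-s) by (field; lra). lra. }
     apply (Rmult_lt_compat_r (Vm*Vz)) in h2; auto. lra.
   - assert (h2 : X^2 < (t-s)/(2*s)).
     { apply (Rmult_lt_reg_r (Vm*Vz)); auto. lra. }
     assert (h1 : 2*s*X^2 + s < t).
     { apply (Rmult_lt_compat_l (2*s)) in h2; [|lra]. replace (2*s*((t-s)/(2*s))) with (t-s) in h2 by (field; lra). lra. }
     apply (Rmult_lt_reg_l s); auto. replace (s*(t/s)) with t by (field; lra). lra. }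
 fold Um Vm Vz.
 assert (E1eq : (z1 - al1/D1)^2 + (z2 - al2/D1)^2 < t^2*(t^2-s^2)/D1^2 <-> E1 < 0) by (unfold E1; lra).
 rewrite E1eq.
 assert (Vzeq : z1^2+z2^2 < 1 <-> 0 < Vz) by (unfold Vz; lra).
 rewrite Vzeq.
 split.
 - intros H. assert (Vz0 : 0 < Vz).
   { assert (Um - k*Vz < 0) by (rewrite key; nra). nra. }
   split; auto. apply step; auto. rewrite key. nra.
 - intros [Vz0 H]. apply step in H; auto. rewrite key in H.
   destruct (Rlt_or_le E1 0); auto. nra.
Qed.

Lemma tC a1 a2 b1 b2 : Cmod (1 - Cconj (a1,a2) * (b1,b2))%C = sqrt (1 - 2*(a1*b1+a2*b2) + (a1^2+a2^2)*(b1^2+b2^2)).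
Proof. rewrite <- t2. rewrite sqrt_pow2; auto. apply Cmod_ge_0. Qed.

Lemma Cmod_lt_iff x1 x2 y1 y2 w1 w2 v1 v2 :
  Cmod ((x1,x2) - (y1,y2))%C < Cmod ((w1,w2) - (v1,v2))%C <-> (x1-y1)^2+(x2-y2)^2 < (w1-v1)^2+(w2-v2)^2.
Proof. replace ((x1,x2) - (y1,y2))%C with (x1-y1,x2-y2) by (unfold Cminus, Cplus, Copp; simpl; f_equal; ring).
 replace ((w1,w2) - (v1,v2))%C with (w1-v1,w2-v2) by (unfold Cminus, Cplus, Copp; simpl; f_equal; ring).
 unfold Cmod; cbn [fst snd]. split; intros H.
 - apply sqrt_lt_0_alt in H. auto.
 - apply sqrt_lt_1_alt. split; auto. apply Rplus_le_le_0_compat; apply pow2_ge_0.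
Qed.

Lemma Cmod_lt1 z1 z2 : Cmod (z1,z2) < 1 <-> z1^2+z2^2 < 1.
Proof. unfold Cmod; cbn [fst snd]. rewrite <- sqrt_1 at 1. split; intros H.
 - apply sqrt_lt_0_alt in H. auto.
 - apply sqrt_lt_1_alt. split; auto. apply Rplus_le_le_0_compat; apply pow2_ge_0.
Qed.

Theorem lemma2p15 (a b : C) :
  in_disk a -> in_disk b -> a <> 0%C -> b <> 0%C -> a <> b ->
  Cmod a <> Cmod b -> on_orthogonal_circle a b ->
  rho (cen a b) (m_ab a b) = rho (m_ab a b) (pt_p a b) /\
  (forall z : C,
     Cmod (z - cen a b)%C < Cmod (cen a b - a)%C <->
     (in_disk z /\ rho (m_ab a b) z < rho a b / 2)).
Proof.
 intros Ha Hb _ _ Hab _ _.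
 destruct a as [a1 a2], b as [b1 b2]. unfold in_disk in Ha, Hb.
 rewrite Cmod_lt1 in Ha, Hb.
 set (A := a1^2+a2^2) in *. set (B := b1^2+b2^2) in *. set (P := a1*b1+a2*b2).
 assert (A0 : 0 <= A) by (unfold A; nra). assert (B0 : 0 <= B) by (unfold B; nra).
 set (s := sqrt ((1-A)*(1-B))).
 set (t := sqrt (1 - 2*P + A*B)).
 set (u := 1 - A*B).
 set (al1 := a1*(1-B)+b1*(1-A)). set (al2 := a2*(1-B)+b2*(1-A)).
 assert (Hs2 : s^2 = (1-A)*(1-B)) by (unfold s; rewrite pow2_sqrt; nra).
 assert (T0 : 0 <= 1 - 2*P + A*B).
 { replace (1 - 2*P + A*B) with ((1-P)^2 + (a1*b2-a2*b1)^2) by (unfold P, A, B; ring). apply Rplus_le_le_0_compat; apply pow2_ge_0. }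
 assert (Ht2 : t^2 = 1 - 2*P + A*B) by (unfold t; rewrite pow2_sqrt; auto).
 assert (Hs : 0 < s) by (unfold s; apply sqrt_lt_R0; nra).
 assert (t0 : 0 <= t) by (unfold t; apply sqrt_pos).
 assert (Hd : t^2 - s^2 = (a1-b1)^2+(a2-b2)^2) by (rewrite Ht2, Hs2; unfold A, B, P; ring).
 assert (d0 : 0 < (a1-b1)^2+(a2-b2)^2).
 { destruct (Rlt_or_le 0 ((a1-b1)^2+(a2-b2)^2)) as [h|h]; auto.
   exfalso. apply Hab. pose proof (pow2_ge_0 (a1-b1)); pose proof (pow2_ge_0 (a2-b2)).
   assert (e1 : (a1-b1)^2 = 0) by lra. assert (e2 : (a2-b2)^2 = 0) by lra.
   assert (a1 = b1) by nra. assert (a2 = b2) by nra.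
   replace b1 with a1 by lra. replace b2 with a2 by lra. reflexivity. }
 assert (Hst : s < t) by nra.
 assert (Hu : 0 < u) by (unfold u; nra).
 assert (HN : al1^2+al2^2 = u^2 - s^2*t^2).
 { replace (s^2*t^2) with ((1-A)*(1-B)*(1-2*P+A*B)) by (rewrite Hs2, Ht2; ring).
   unfold al1, al2, u, A, B, P. ring. }
 assert (Hu2 : s*t <= u) by nra.
 assert (p1 : 0 < u+t^2) by nra. assert (p2 : 0 < u+s^2) by nra. assert (p3 : 0 < u+s*t) by nra.
 assert (Ecen : cen (a1,a2) (b1,b2) = (al1/(u+t^2), al2/(u+t^2))).
 { unfold cen. rewrite alpha_eq, den_cen. rewrite Cdiv_R.
   - simpl. replace (2 - 2*(a1*b1+a2*b2)) with (u+t^2) by (rewrite Ht2; unfold u, P; ring). reflexivity.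
   - replace (2 - 2*(a1*b1+a2*b2)) with (u+t^2) by (rewrite Ht2; unfold u, P; ring). lra. }
 assert (Em : m_ab (a1,a2) (b1,b2) = (al1/(u+s*t), al2/(u+s*t))).
 { unfold m_ab. rewrite alpha_eq, tC, !Cmod2. rewrite Cdiv_R; [reflexivity|]. fold A B P s t. change (u + s*t <> 0). lra. }
 assert (Ep : pt_p (a1,a2) (b1,b2) = (al1/(u+s^2), al2/(u+s^2))).
 { unfold pt_p. rewrite alpha_eq, !Cmod2. fold A B.
   replace (2 - A - B) with (u+s^2) by (rewrite Hs2; unfold u; ring).
   rewrite Cdiv_R; [reflexivity|lra]. }
 rewrite Ecen, Em, Ep. split.
 - rewrite !rho_eq. f_equal.
   rewrite !(ray al1 al2 (u^2 - s^2*t^2)) by (auto; lra).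
   f_equal. apply core1; auto.
 - intros [z1 z2]. rewrite Cmod_lt_iff. unfold in_disk. rewrite Cmod_lt1, !rho_eq.
   replace ((al1/(u+t^2) - a1)^2 + (al2/(u+t^2) - a2)^2) with (t^2*(t^2-s^2)/(u+t^2)^2).
   2:{ assert (num: (al1 - (u+t^2)*a1)^2 + (al2 - (u+t^2)*a2)^2 = t^2*(t^2-s^2))
         by (rewrite Ht2, Hs2; unfold al1, al2, u, A, B, P; ring).
       rewrite <- num. field. lra. }
   fold A B s.
   replace (2 * arcsinh (sqrt ((a1 - b1) ^ 2 + (a2 - b2) ^ 2) / s) / 2)
     with (arcsinh (sqrt ((a1 - b1) ^ 2 + (a2 - b2) ^ 2) / s)) by field.
   apply core2; auto.
   + apply Rdiv_le_0_compat; [apply sqrt_pos| auto].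
   + unfold Rdiv. rewrite Rpow_mult_distr, pow2_sqrt by nra. rewrite <- Hd.
     rewrite pow_inv. field. lra.
Qed.
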